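(* Let $\theta_1,\theta_2\in\mathbb{R}$ satisfy $\sin(\theta_1)\sin(\theta_2)>0$. Then the two-player two-strategy game with payoffs \[ G_1=\begin{bmatrix}\frac{1}{\sqrt2}\sin(\theta_1+\frac{\pi}{4})&\frac{1}{\sqrt2}\cos(\theta_1+\frac{\pi}{4})\\ -\frac{1}{\sqrt2}\sin(\theta_1+\frac{\pi}{4})&-\frac{1}{\sqrt2}\cos(\theta_1+\frac{\pi}{4})\end{bmatrix},\qquad G_2=\begin{bmatrix}\frac{1}{\sqrt2}\sin(\theta_2+\frac{\pi}{4})&-\frac{1}{\sqrt2}\sin(\theta_2+\frac{\pi}{4})\\ \frac{1}{\sqrt2}\cos(\theta_2+\frac{\pi}{4})&-\frac{1}{\sqrt2}\cos(\theta_2+\frac{\pi}{4})\end{bmatrix} \] (rows indexed by player 1's strategy $a_1\in\{A,B\}$, columns by player 2's strategy $a_2\in\{A,B\}$) is invariant-common-payoff.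
   Context: A two-player game $(G_1,G_2)$ is invariant-common-payoff if there exist scalars $s_1,s_2>0$ and functions $b_1$ (of $a_2$) and $b_2$ (of $a_1$) such that $\hat G_1(a)=s_1G_1(a)+b_1(a_2)$ and $\hat G_2(a)=s_2G_2(a)+b_2(a_1)$ satisfy $\hat G_1(a)=\hat G_2(a)$ for all joint strategies $a=(a_1,a_2)$. *)

(* Defs.v *)
From Stdlib Require Import Reals.
Open Scope R_scope.

Inductive strat : Type := SA | SB.

Definition payoff := strat -> strat -> R.

Definition invariant_common_payoff (G1 G2 : payoff) : Prop :=
  exists (s1 s2 : R) (b1 b2 : strat -> R),
    0 < s1 /\ 0 < s2 /\
    forall a1 a2 : strat,
      s1 * G1 a1 a2 + b1 a2 = s2 * G2 a1 a2 + b2 a1.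

Definition G1_of (t1 : R) : payoff := fun a1 a2 =>
  match a1, a2 with
  | SA, SA => / sqrt 2 * sin (t1 + PI / 4)
  | SA, SB => / sqrt 2 * cos (t1 + PI / 4)
  | SB, SA => - (/ sqrt 2 * sin (t1 + PI / 4))
  | SB, SB => - (/ sqrt 2 * cos (t1 + PI / 4))
  end.

Definition G2_of (t2 : R) : payoff := fun a1 a2 =>
  match a1, a2 with
  | SA, SA => / sqrt 2 * sin (t2 + PI / 4)
  | SA, SB => - (/ sqrt 2 * sin (t2 + PI / 4))
  | SB, SA => / sqrt 2 * cos (t2 + PI / 4)
  | SB, SB => - (/ sqrt 2 * cos (t2 + PI / 4))
  end.

(* Main.v *)
Require Import Defs.
From Stdlib Require Import Reals Lra Psatz.
Open Scope R_scope.

Lemma key (t : R) :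
  / sqrt 2 * sin (t + PI / 4) = / sqrt 2 * cos (t + PI / 4) + sin t.
Proof.
  rewrite sin_plus, cos_plus, sin_PI4, cos_PI4.
  assert (H2 : sqrt 2 * sqrt 2 = 2) by (apply sqrt_sqrt; lra).
  assert (Hn : sqrt 2 <> 0) by (intro E; rewrite E in H2; lra).
  unfold Rdiv. rewrite Rmult_1_l.
  replace (/ sqrt 2 * (sin t * / sqrt 2 + cos t * / sqrt 2))
    with ((sin t + cos t) * / (sqrt 2 * sqrt 2)) by (field; exact Hn).
  replace (/ sqrt 2 * (cos t * / sqrt 2 - sin t * / sqrt 2))
    with ((cos t - sin t) * / (sqrt 2 * sqrt 2)) by (field; exact Hn).
  rewrite H2. field.
Qed.

Theorem mainTheorem4 (t1 t2 : R) (h : 0 < sin t1 * sin t2) :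
  invariant_common_payoff (G1_of t1) (G2_of t2).
Proof.
  unfold invariant_common_payoff.
  pose proof (key t1) as K1. pose proof (key t2) as K2.
  set (s1 := sin t2 * sin t2). set (s2 := sin t1 * sin t2).
  set (p1 := / sqrt 2 * sin (t1 + PI / 4)) in *.
  set (q1 := / sqrt 2 * cos (t1 + PI / 4)) in *.
  set (p2 := / sqrt 2 * sin (t2 + PI / 4)) in *.
  set (q2 := / sqrt 2 * cos (t2 + PI / 4)) in *.
  exists s1, s2.
  exists (fun a2 => match a2 with SA => 0 | SB => (s1*p1 - s2*p2) - (s1*q1 - s2*(-p2)) end).
  exists (fun a1 => match a1 with SA => s1*p1 - s2*p2 | SB => s1*(-p1) - s2*q2 end).
  split; [|split].
  - unfold s1. assert (sin t2 <> 0) by (intro E; rewrite E in h; lra).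
    assert (0 < sin t2 * sin t2 \/ sin t2 * sin t2 <= 0) as [|] by lra; auto; nra.
  - exact h.
  - intros a1 a2; destruct a1, a2; simpl; fold p1 q1 p2 q2;
      rewrite ?K1, ?K2; unfold s1, s2; ring.
Qed.
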